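(* In the contention game with $k=2$ channels under acknowledgement-based feedback and $n\in\{2,3,4\}$ players, the anonymous protocol $f^2$ (in every slot, regardless of history, a pending player transmits on each of the two channels with probability $1/2$ and never stays idle) is an equilibrium protocol, with expected latency of each player equal to $2$, $8/3$ and $4$ for $n=2,3,4$ respectively.
   Context: Contention game: $n$ players, channel set $K=\{1,\dots,k\}$, discrete slots $t=1,2,\dots$; each player has one packet and is initially pending. In each slot a pending player chooses (possibly at random) an action in $\{0,1,\dots,k\}$ ($0$ = no transmission, $a$ = transmit on channel $a$). A lone transmitter on a channel succeeds and leaves; two or more transmitters on a channel collide and remain pending. Latency $T_i$ = slot of player $i$'s successful transmission; players minimize expected latency. Acknowledgement-based feedback: only a player who attempted transmission learns whether she succeeded; decision rules depend only on the personal action history. A protocol is a sequence of such decision rules; an anonymous protocol is used by all players and does not depend on identity. It is an equilibrium protocol if, when all players use it, no player at any slot and after any history can decrease her conditional expected latency by unilaterally deviating. *)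

(* Defs.v *)
From HB Require Import structures.
From mathcomp Require Import all_boot all_order all_algebra.
From mathcomp Require Import all_classical all_reals all_analysis.
Set Implicit Arguments. Unset Strict Implicit. Unset Printing Implicit Defensive.
Import Order.TTheory GRing.Theory Num.Theory.
Local Open Scope ring_scope.

(** Contention game with [n] players and [k] channels.
    Actions: [0] = idle, [a : 1..k] = transmit on channel [a]. *)
Section Game.
Variables (R : realType) (n k : nat).

Definition action := 'I_k.+1.

(** Personal history of a pending player: the sequence of her past actions
    (while pending, every attempted transmission failed, so this is the whole
    personal information under acknowledgement-based feedback).  Its size is
    the current slot minus one. *)
Definition history := seq action.

(** A decision rule (= a protocol indexed by the personal history, which also
    determines the slot): a probability distribution over actions. *)
Definition rule := history -> action -> R.

Definition is_rule (f : rule) : Prop :=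
  forall h, (forall a, 0 <= f h a) /\ \sum_(a : action) f h a = 1.

(** Global state after some slots: [None] = player has left (succeeded),
    [Some h] = pending with personal history [h]. *)
Definition state := {ffun 'I_n -> option history}.

Definition init_state : state := [ffun=> Some [::]].

Definition profile := {ffun 'I_n -> action}.

Definition succeeds (s : state) (a : profile) (j : 'I_n) : bool :=
  (a j != ord0) &&
  [forall m, (m != j) ==> ~~ ((s m != None) && (a m == a j))].

Definition step (s : state) (a : profile) : state :=
  [ffun j => match s j with
             | None => None
             | Some h => if succeeds s a j then None else Some (rcons h (a j))
             end].

Definition profile_prob (P : 'I_n -> rule) (s : state) (a : profile) : R :=
  \prod_(j : 'I_n) match s j with
                   | None => (a j == ord0)%:R
                   | Some h => P j h (a j)
                   end.

Fixpoint dist_at (P : 'I_n -> rule) (t : nat) : seq (R * state) :=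
  match t with
  | 0 => [:: (1, init_state)]
  | t'.+1 => flatten [seq [seq (ps.1 * profile_prob P ps.2 a, step ps.2 a)
                          | a <- enum {: profile}] | ps <- dist_at P t']
  end.

(** Probability that player [i] is still pending after [t] slots, i.e. P(T_i > t). *)
Definition pending_prob (P : 'I_n -> rule) (i : 'I_n) (t : nat) : R :=
  \sum_(ps <- dist_at P t) (if ps.2 i is Some _ then ps.1 else 0).

Definition deviate (f : rule) (i : 'I_n) (g : rule) : 'I_n -> rule :=
  fun j => if j == i then g else f.

Definition forced (h : history) (g : rule) : rule :=
  fun h' => if (size h' < size h)%N then (fun a => (a == nth ord0 h (size h'))%:R)
            else g h'.

(** Conditional expected latency of player [i], given that at slot [size h + 1]
    she is pending with personal history [h], when she uses [g] from then on
    and all other players use [f]: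
      E[T_i | hist] = size h + sum_{t >= size h} P(T_i > t | hist). *)
Definition cond_latency (f : rule) (i : 'I_n) (h : history) (g : rule) : \bar R :=
  let P := deviate f i (forced h g) in
  ((size h)%:R)%:E +
  (\sum_(size h <= t <oo) ((pending_prob P i t) / (pending_prob P i (size h)))%:E)%E.

(** The history [h] can occur for player [i] (positive probability of being
    pending with history [h] given her own actions [h]; this does not depend
    on her continuation rule). *)
Definition possible_history (f : rule) (i : 'I_n) (h : history) : Prop :=
  0 < pending_prob (deviate f i (forced h f)) i (size h).

Definition equilibrium (f : rule) : Prop :=
  is_rule f /\
  forall (i : 'I_n) (h : history), possible_history f i h ->
  forall g : rule, is_rule g -> (cond_latency f i h f <= cond_latency f i h g)%E.

End Game.

Definition f2 (R : realType) : rule R 2 :=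
  fun _ a => if a == ord0 then 0 else 2^-1.

(* Main.v *)
Require Import Defs.
From HB Require Import structures.
From mathcomp Require Import all_boot all_order all_algebra.
From mathcomp Require Import all_classical all_reals all_analysis.
From mathcomp Require Import ring lra.
Import Order.TTheory GRing.Theory Num.Theory.
Set Implicit Arguments. Unset Strict Implicit. Unset Printing Implicit Defensive.
Local Open Scope ring_scope.


Fixpoint all_lists {T : Type} (xs : seq T) (n : nat) : seq (seq T) :=
  if n is n'.+1 then [seq x :: l | x <- xs, l <- all_lists xs n'] else [:: [::]].

Lemma mem_all_lists (T : eqType) (xs : seq T) n l :
  (l \in all_lists xs n) = (size l == n) && all (mem xs) l.
Proof.
elim: n l => [|n IH] [|x l] //=.
- by apply/allpairsP => [[p [_ _]]].
- apply/allpairsP/idP => [[[y l'] /= [yx l'in [-> ->]]]|/and3P[Hs Hx Ha]].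
    by rewrite yx /=; move: l'in; rewrite IH => /andP[/eqP -> ->]; rewrite eqxx.
  by exists (x, l) => /=; split => //; rewrite IH -(eqSS (size l)) Hs.
Qed.

Lemma all_lists_uniq (T : eqType) (xs : seq T) n : uniq xs -> uniq (all_lists xs n).
Proof.
move=> ux; elim: n => [|n IH] //=.
apply: allpairs_uniq => //. by move=> [a l] [b l'] _ _ /= [-> ->].
Qed.

Lemma big_foldr (R : Type) (idx : R) (op : R -> R -> R) (I : Type) (s : seq I) (F : I -> R) :
  \big[op/idx]_(x <- s) F x = foldr (fun x acc => op (F x) acc) idx s.
Proof. by elim: s => [|x s IH]; rewrite ?big_nil ?big_cons ?IH. Qed.

Definition succL (n:nat) (bl : seq bool) (t : seq nat) (j : nat) : bool :=
  (nth 0%N t j != 0%N) && all (fun m => (m == j) || ~~ (nth false bl m && (nth 0%N t m == nth 0%N t j))) (iota 0 n).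
Definition stepL n bl t := [seq nth false bl j && ~~ succL n bl t j | j <- iota 0 n].
Definition Vq (m : nat) : rat := nth 0 [:: 1; 2; 8%:R/3%:R; 4] m.
Definition others n bl i := count (fun m => (m != i) && nth false bl m) (iota 0 n).
Definition WL n i bl : rat := if nth false bl i then Vq (others n bl i) else 0.
Definition PL (i : nat) bl : rat := (nth false bl i)%:R.
Definition wq (b : bool) (x : nat) : rat := if b then (if x == 0%N then 0 else 1/2) else (x == 0%N)%:R.
Definition weightL n bl i t := foldr (fun m acc => (if m == i then 1 else wq (nth false bl m) (nth 0%N t m)) * acc) 1 (iota 0 n).
Definition QL n bl i c (O : seq bool -> rat) := foldr (fun t acc => ((nth 0%N t i == c)%:R * weightL n bl i t * O (stepL n bl t)) + acc) 0 (all_lists [::0;1;2]%N n).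
Definition check n := all (fun bl => all (fun i => ~~ nth false bl i || all (fun c => (WL n i bl - 1 <= QL n bl i c (WL n i)) && ((c == 0%N) || (QL n bl i c (WL n i) == WL n i bl - 1)) && (QL n bl i c (PL i) <= 1)) (iota 0 3)) (iota 0 n)) (all_lists [::false;true] n).

Lemma check2 : check 2. Proof. by vm_compute. Qed.
Lemma check3 : check 3. Proof. by vm_compute. Qed.
Lemma check4 : check 4. Proof. by vm_compute. Qed.

Lemma checkP n bl i c : check n -> size bl = n -> (i < n)%N -> nth false bl i -> (c < 3)%N ->
  [/\ WL n i bl - 1 <= QL n bl i c (WL n i),
      (c != 0%N -> QL n bl i c (WL n i) = WL n i bl - 1) &
      QL n bl i c (PL i) <= 1].
Proof.
move=> /allP H sz lti bi ltc.
have : bl \in all_lists [:: false; true] n.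
  rewrite mem_all_lists sz eqxx /=; apply/allP => b _; by case: b.
move=> /H /allP Hi.
have := Hi i; rewrite mem_iota lti bi => /(_ isT) /orP [//|Hall].
have Hc : forall c', c' \in iota 0 3 -> _ := fun c' => (elimT allP Hall c').
have := Hc c; rewrite mem_iota ltc => /(_ isT) /andP[/andP[h1 h2] h3]; split => // cn0.
by move: h2; rewrite (negbTE cn0) /= => /eqP.
Qed.

Lemma WL_le n i bl : 0 <= WL n i bl <= 4 * PL i bl.
Proof.
rewrite /WL /PL; case: (nth false bl i); last by rewrite mulr0 lexx.
rewrite mulr1; move: (others n bl i) => m.
case: m => [|[|[|[|m]]]]; try by vm_compute.
by rewrite /Vq /= nth_nil lexx /=; vm_compute.
Qed.


Section Bridge.
Variables (R : realType) (n : nat).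
Notation state := (state n 2).
Notation profile := (profile n 2).

Definition patL (s : state) : seq bool := [seq s j != None | j <- enum 'I_n].
Definition prl (a : profile) : seq nat := [seq val (a j) | j <- enum 'I_n].
Definition mkff (t : seq nat) : profile := [ffun j : 'I_n => inord (nth 0%N t j)].
Notation LL := (all_lists [:: 0; 1; 2]%N n).

Lemma nth_enum_self (j : 'I_n) : nth j (enum 'I_n) j = j.
Proof. by apply: val_inj; rewrite /= nth_enum_ord. Qed.

Lemma size_patL s : size (patL s) = n.
Proof. by rewrite size_map size_enum_ord. Qed.
Lemma nth_patL s (j : 'I_n) : nth false (patL s) j = (s j != None).
Proof. by rewrite /patL (nth_map j) ?size_enum_ord // nth_enum_self. Qed.
Lemma size_prl a : size (prl a) = n.
Proof. by rewrite size_map size_enum_ord. Qed.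
Lemma nth_prl a (j : 'I_n) : nth 0%N (prl a) j = a j.
Proof. by rewrite /prl (nth_map j) ?size_enum_ord // nth_enum_self. Qed.

Lemma prl_in a : prl a \in LL.
Proof.
rewrite mem_all_lists size_prl eqxx /=; apply/allP => x /mapP [j _ ->].
by case: (a j) => [[|[|[|m]]] //].
Qed.

Lemma nth_LL t m : t \in LL -> (nth 0%N t m < 3)%N.
Proof.
rewrite mem_all_lists => /andP[_ /allP H].
case: (ltnP m (size t)) => [lt|ge]; last by rewrite nth_default.
by have := H _ (mem_nth 0%N lt); rewrite !inE => /or3P[] /eqP ->.
Qed.

Lemma mkff_prl a : mkff (prl a) = a.
Proof. by apply/ffunP => j; rewrite ffunE nth_prl inord_val. Qed.

Lemma prl_mkff t : t \in LL -> prl (mkff t) = t.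
Proof.
move=> tL; have := tL; rewrite mem_all_lists => /andP[/eqP st _].
apply: (@eq_from_nth _ 0%N); first by rewrite size_prl st.
move=> m; rewrite size_prl => ltm.
by rewrite -[m]/(val (Ordinal ltm)) nth_prl ffunE /= inordK // nth_LL.
Qed.

Lemma sum_profiles (F : profile -> R) :
  \sum_(a : profile) F a = \sum_(t <- LL) F (mkff t).
Proof.
rewrite -(big_map mkff xpredT F); apply: perm_big; apply: uniq_perm.
- exact: index_enum_uniq.
- rewrite map_inj_in_uniq ?all_lists_uniq //.
  by move=> t1 t2 h1 h2 e; rewrite -(prl_mkff h1) -(prl_mkff h2) e.
- move=> a; rewrite mem_index_enum; symmetry; apply/mapP; exists (prl a).
    exact: prl_in.
  by rewrite mkff_prl.
Qed.

Lemma succeedsE s a (j : 'I_n) : succeeds s a j = succL n (patL s) (prl a) j.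
Proof.
rewrite /succeeds /succL nth_prl; congr andb.
apply/forallP/allP => [H m | H m].
- rewrite mem_iota /= add0n => ltm.
  have := H (Ordinal ltm).
  rewrite -[m]/(val (Ordinal ltm)) nth_patL !nth_prl.
  case: (Ordinal ltm =P j) => [-> /= | ne]; first by rewrite eqxx.
  have -> : (val (Ordinal ltm) == val j) = false by apply/negbTE; rewrite val_eqE; apply/eqP.
  by case: (_ && _).
- apply/implyP => mj; have := H m; rewrite mem_iota ltn_ord => /(_ isT).
  by rewrite nth_patL !nth_prl val_eqE (negbTE mj) /= val_eqE.
Qed.

Lemma patL_step s a : patL (step s a) = stepL n (patL s) (prl a).
Proof.
apply: (@eq_from_nth _ false); first by rewrite size_patL size_map size_iota.
move=> m; rewrite size_patL => ltm.
rewrite (nth_map 0%N) ?size_iota // nth_iota // add0n.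
rewrite -[m]/(val (Ordinal ltm)) !nth_patL -succeedsE /step ffunE.
by case: (s _) => [h|] //=; case: (succeeds _ _ _).
Qed.

End Bridge.


Lemma weightLE n bl (i : nat) t : weightL n bl i t =
  \prod_(m < n) (if (m : nat) == i then 1 else wq (nth false bl m) (nth 0%N t m)).
Proof.
rewrite -(big_mkord xpredT (fun m => if m == i then 1 else wq (nth false bl m) (nth 0%N t m))).
by rewrite /index_iota subn0 big_foldr.
Qed.

Lemma QLE n bl (i : nat) c O : QL n bl i c O =
  \sum_(t <- all_lists [:: 0; 1; 2]%N n) ((nth 0%N t i == c)%:R * weightL n bl i t * O (stepL n bl t)).
Proof. by rewrite big_foldr. Qed.

Section PerState.
Variables (R : realType) (n : nat) (i : 'I_n) (r : rule R 2).
Notation P := (deviate (f2 R) i r).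
Definition Wr (s : state n 2) : R := ratr (WL n i (patL s)).
Definition Pr (s : state n 2) : R := ratr (PL i (patL s)).

Lemma ratr_half : ratr (1/2 : rat) = (2^-1 : R).
Proof. by rewrite fmorph_div rmorph1 rmorph_nat div1r. Qed.

Lemma factorE (s : state n 2) (a : profile n 2) (j : 'I_n) : j != i ->
  (match s j with None => (a j == ord0)%:R | Some h => P j h (a j) end) =
  ratr (wq (nth false (patL s) j) (nth 0%N (prl a) j)).
Proof.
move=> ji; rewrite nth_patL nth_prl /wq.
case: (s j) => [h|] /=.
- rewrite /deviate (negbTE ji) /f2.
  have -> : (a j == ord0) = (val (a j) == 0%N) by [].
  by case: (_ == _); rewrite ?rmorph0 ?ratr_half.
- by rewrite ratr_nat.
Qed.

Lemma prob_split (s : state n 2) hi (a : profile n 2) : s i = Some hi ->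
  profile_prob P s a = r hi (a i) * ratr (weightL n (patL s) i (prl a)).
Proof.
move=> si; rewrite /profile_prob (bigD1 i) //= si /deviate eqxx; congr (_ * _).
rewrite weightLE rmorph_prod [RHS](bigD1 i) //= eqxx rmorph1 mul1r.
apply: eq_bigr => j ji.
have e : ((j:nat) == (i:nat)) = false by rewrite val_eqE; exact: negbTE.
by rewrite e -factorE.
Qed.

Lemma distr3 (d : 'I_3 -> R) x : d x = \sum_(c : 'I_3) d c * (x == c)%:R.
Proof.
rewrite (bigD1 x) //= eqxx mulr1 big1 ?addr0 // => c cx.
by rewrite eq_sym (negbTE cx) mulr0.
Qed.

Lemma expect_split (s : state n 2) hi (O : seq bool -> rat) : s i = Some hi ->
  \sum_(a : profile n 2) profile_prob P s a * ratr (O (patL (step s a))) =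
  \sum_(c : 'I_3) r hi c * ratr (QL n (patL s) i c O).
Proof.
move=> si; rewrite sum_profiles.
under eq_bigr do rewrite (prob_split _ si) (distr3 (r hi)) !mulr_suml.
rewrite exchange_big /=; apply: eq_bigr => c _.
rewrite QLE rmorph_sum mulr_sumr big_seq_cond [RHS]big_seq_cond.
apply: eq_bigr => t /andP[tL _].
rewrite patL_step prl_mkff // !rmorphM rmorph_nat !mulrA; congr (_ * _ * _ * _).
have h3 := nth_LL i tL.
have -> : (mkff n t i == c) = (nth 0%N t i == c) by rewrite -val_eqE /= ffunE /= inordK.
by [].
Qed.

End PerState.


Section PerState2.
Variables (R : realType) (n : nat) (i : 'I_n) (r : rule R 2).
Hypothesis hc : check n.
Hypothesis hr : is_rule r.
Notation P := (deviate (f2 R) i r).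
Notation Wr := (Wr R i).
Notation Pr := (Pr R i).

Lemma step_none (s : state n 2) a : s i = None -> step s a i = None.
Proof. by move=> si; rewrite /step ffunE si. Qed.

Lemma WL_none (s : state n 2) : s i = None -> WL n i (patL s) = 0.
Proof. by move=> si; rewrite /WL nth_patL si. Qed.
Lemma PL_none (s : state n 2) : s i = None -> PL i (patL s) = 0.
Proof. by move=> si; rewrite /PL nth_patL si. Qed.

Lemma sum_r hi : \sum_(c : 'I_3) r hi c = 1.
Proof. by have [_ ->] := hr hi. Qed.

Lemma stateW (s : state n 2) :
  Wr s - Pr s <= \sum_(a : profile n 2) profile_prob P s a * Wr (step s a) /\
  ((forall hi, s i = Some hi -> r hi ord0 = 0) ->
   \sum_(a : profile n 2) profile_prob P s a * Wr (step s a) = Wr s - Pr s).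
Proof.
case si: (s i) => [hi|]; last first.
  rewrite /Wr /Pr WL_none // PL_none // rmorph0 subr0.
  have -> : \sum_(a : profile n 2) profile_prob P s a * ratr (WL n i (patL (step s a))) = 0.
    by rewrite big1 // => a _; rewrite WL_none ?step_none // rmorph0 mulr0.
  by [].
rewrite /Wr (expect_split _ _ si).
have bi : nth false (patL s) i by rewrite nth_patL si.
have H c : (c < 3)%N -> _ := checkP (c:=c) hc (size_patL s) (ltn_ord i) bi.
have -> : Pr s = 1 by rewrite /Pr /PL bi rmorph1.
have E : ratr (WL n i (patL s)) - 1 = \sum_(c : 'I_3) r hi c * (ratr (WL n i (patL s)) - 1 : R).
  by rewrite -mulr_suml sum_r mul1r.
split.
- rewrite E; apply: ler_sum => c _; apply: ler_wpM2l; first by have [h _] := hr hi; exact: h.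
  have [h1 _ _] := H c (ltn_ord c).
  by rewrite -(rmorph1 (ratr : {rmorphism rat -> R})) -rmorphB ler_rat.
- move=> h0; rewrite E; apply: eq_bigr => c _.
  case: (c =P ord0) => [->|cn0]; first by rewrite h0 // !mul0r.
  have [_ h2 _] := H c (ltn_ord c).
  rewrite h2; first by rewrite rmorphB rmorph1.
  by apply/eqP => c0; apply: cn0; apply: val_inj.
Qed.

Lemma stateP (s : state n 2) :
  \sum_(a : profile n 2) profile_prob P s a * Pr (step s a) <= Pr s.
Proof.
case si: (s i) => [hi|]; last first.
  rewrite /Pr PL_none // rmorph0 big1 // => a _.
  by rewrite PL_none ?step_none // rmorph0 mulr0.
rewrite /Pr (expect_split _ _ si).
have bi : nth false (patL s) i by rewrite nth_patL si.
have -> : ratr (PL i (patL s)) = 1 :> R by rewrite /PL bi rmorph1.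
rewrite -(sum_r hi); apply: ler_sum => c _.
rewrite -[X in _ <= X]mulr1; apply: ler_wpM2l; first by have [h _] := hr hi; exact: h.
have [_ _ h3] := checkP (c:=c) hc (size_patL s) (ltn_ord i) bi (ltn_ord c).
by rewrite -(rmorph1 (ratr : {rmorphism rat -> R})) ler_rat.
Qed.

End PerState2.


Section Dist.
Variables (R : realType) (n : nat).

Lemma sum_dist_succ (P : 'I_n -> rule R 2) t (G : state n 2 -> R) :
  \sum_(ps <- dist_at P t.+1) ps.1 * G ps.2 =
  \sum_(ps <- dist_at P t) ps.1 * \sum_(a : profile n 2) profile_prob P ps.2 a * G (step ps.2 a).
Proof.
rewrite /= big_flatten big_map; apply: eq_bigr => ps _.
rewrite big_map big_enum /= mulr_sumr; apply: eq_bigr => a _ /=; by rewrite mulrA.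
Qed.

Lemma dist_size (P : 'I_n -> rule R 2) t ps :
  ps \in dist_at P t -> forall j h, ps.2 j = Some h -> size h = t.
Proof.
elim: t ps => [|t IH] ps /=.
  by rewrite inE => /eqP -> j h; rewrite ffunE => -[<-].
move=> /flatten_mapP [ps0 H0 /mapP [a _ ->]] j h /=.
rewrite /step ffunE; case e: (ps0.2 j) => [h0|] //.
case: (succeeds _ _ _) => //= -[<-].
by rewrite size_rcons (IH _ H0 j h0 e).
Qed.

Lemma dist_ge0 (P : 'I_n -> rule R 2) t : (forall j h a, 0 <= P j h a) ->
  forall ps, ps \in dist_at P t -> 0 <= ps.1.
Proof.
move=> HP; elim: t => [|t IH] ps /=.
  by rewrite inE => /eqP -> /=.
move=> /flatten_mapP [ps0 H0 /mapP [a _ ->]] /=.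
rewrite mulr_ge0 ?IH // /profile_prob prodr_ge0 // => j _.
by case: (ps0.2 j) => [h|] //; rewrite ler0n.
Qed.

Lemma dist_eq (P P' : 'I_n -> rule R 2) t :
  (forall j h, (size h < t)%N -> P j h = P' j h) -> dist_at P t = dist_at P' t.
Proof.
elim: t => [|t IH] // H /=.
rewrite IH => [|j h lt]; last by apply: H; rewrite ltnS ltnW.
congr flatten; apply/eq_in_map => ps Hps; apply: eq_map => a; congr (_, _); congr (_ * _).
rewrite /profile_prob; apply: eq_bigr => j _; case e: (ps.2 j) => [h|] //.
by rewrite H // (dist_size Hps e).
Qed.

Definition EW (P : 'I_n -> rule R 2) (i : 'I_n) t := \sum_(ps <- dist_at P t) ps.1 * Wr R i ps.2.
Definition PP (P : 'I_n -> rule R 2) (i : 'I_n) t := \sum_(ps <- dist_at P t) ps.1 * Pr R i ps.2.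

Lemma pending_probE P i t : pending_prob P i t = PP P i t.
Proof.
apply: eq_bigr => ps _; rewrite /Pr /PL nth_patL.
by case: (ps.2 i) => [h|] /=; rewrite ?rmorph1 ?rmorph0 ?mulr1 ?mulr0.
Qed.

Variables (i : 'I_n) (r : rule R 2).
Hypothesis hc : check n.
Hypothesis hr : is_rule r.
Notation P := (deviate (f2 R) i r).

Lemma P_ge0 j h a : 0 <= P j h a.
Proof.
rewrite /deviate; case: (j == i); first by have [h0 _] := hr h; exact: h0.
by rewrite /f2; case: (_ == _); rewrite ?invr_ge0 ?ler0n.
Qed.

Lemma EW_step t : EW P i t - PP P i t <= EW P i t.+1.
Proof.
rewrite /EW /PP sum_dist_succ -sumrB big_seq [X in _ <= X]big_seq.
apply: ler_sum => ps Hps; rewrite -mulrBr; apply: ler_wpM2l.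
  exact: (dist_ge0 P_ge0 Hps).
by have [h _] := stateW i hc hr ps.2.
Qed.

Lemma EW_step_eq t : (forall ps, ps \in dist_at P t -> forall hi, ps.2 i = Some hi -> r hi ord0 = 0) ->
  EW P i t.+1 = EW P i t - PP P i t.
Proof.
move=> H0; rewrite /EW /PP sum_dist_succ -sumrB big_seq [RHS]big_seq.
apply: eq_bigr => ps Hps; rewrite -mulrBr; congr (_ * _).
by have [_ ->] := stateW i hc hr ps.2; last exact: H0.
Qed.

Lemma PP_step t : PP P i t.+1 <= PP P i t.
Proof.
rewrite /PP sum_dist_succ big_seq [X in _ <= X]big_seq.
apply: ler_sum => ps Hps; apply: ler_wpM2l; first exact: (dist_ge0 P_ge0 Hps).
exact: (stateP i hc hr ps.2).
Qed.

Lemma EW_bound t : 0 <= EW P i t <= 4 * PP P i t.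
Proof.
rewrite /EW /PP mulr_sumr; apply/andP; split.
  rewrite big_seq sumr_ge0 // => ps Hps; apply: mulr_ge0; first exact: (dist_ge0 P_ge0 Hps).
  by have /andP[h _] := WL_le n i (patL ps.2); rewrite /Wr ler0q.
rewrite big_seq [X in _ <= X]big_seq; apply: ler_sum => ps Hps.
rewrite [X in _ <= X]mulrCA; apply: ler_wpM2l; first exact: (dist_ge0 P_ge0 Hps).
have /andP[_ h] := WL_le n i (patL ps.2).
by rewrite /Wr /Pr -(rmorph_nat (ratr : {rmorphism rat -> R}) 4) -rmorphM ler_rat.
Qed.

End Dist.


Lemma archi_lemma (R : realType) (x s : R) : 0 <= s ->
  (forall d : nat, (0 < d)%N -> d%:R * x <= (d%:R + 4) * s) -> x <= s.
Proof.
move=> s0 H; rewrite leNgt; apply/negP => sx.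
have e0 : 0 < x - s by rewrite subr_gt0.
have b0 : 0 <= 4 * s / (x - s) by rewrite divr_ge0 ?mulr_ge0 // ltW.
have := archi_boundP b0; set d := Num.Def.archi_bound _ => hd.
rewrite ltr_pdivrMr // in hd.
have := H d.+1 isT; rewrite -natr1 => h2.
have hd' : 4 * s < (d%:R + 1) * (x - s).
  apply: (lt_le_trans hd); rewrite ler_pM2r // lerDl //.
nra.
Qed.

Lemma partial_le (R : realType) (u : nat -> \bar R) L T : (forall t, (L <= t)%N -> (0 <= u t)%E) ->
  (\sum_(L <= t < T) u t <= \sum_(L <= t <oo) u t)%E.
Proof. move=> H. exact: (@nneseries_lim_ge R u xpredT L T (fun t Lt _ => H t Lt)). Qed.
Lemma ser_ge0 (R : realType) (u : nat -> \bar R) L : (forall t, (L <= t)%N -> (0 <= u t)%E) ->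
  (0 <= \sum_(L <= t <oo) u t)%E.
Proof. move=> H. exact: (@nneseries_ge0 R u xpredT L (fun t Lt _ => H t Lt)). Qed.

Lemma alg_lemma (R : realType) (d X Sg E Q p s : R) : 0 <= d -> 0 < p -> Sg / p <= s ->
  X <= Sg + E -> d * Q <= Sg -> E <= 4 * Q -> d * (X / p) <= (d + 4) * s.
Proof.
move=> d0 p0 hp h1 h2 h3.
have h4 : d * X <= (d + 4) * Sg.
  have h5 : d * X <= d * Sg + d * E by rewrite -mulrDr ler_wpM2l.
  have h6 : d * E <= 4 * (d * Q) by rewrite mulrCA ler_wpM2l.
  have h7 : 4 * (d * Q) <= 4 * Sg by rewrite ler_wpM2l.
  rewrite mulrDl; lra.
rewrite mulrA -[X in _ <= X](mulfK (lt0r_neq0 p0)) ler_pM2r ?invr_gt0 //.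
apply: (le_trans h4).
rewrite -[X in _ <= X]mulrA ler_wpM2l ?addr_ge0 //.
by rewrite -ler_pdivrMr.
Qed.

Section Tele.
Variables (R : realType) (n : nat) (i : 'I_n) (r : rule R 2).
Hypothesis hc : check n.
Hypothesis hr : is_rule r.
Notation P := (deviate (f2 R) i r).
Notation EW := (EW P i).
Notation PP := (PP P i).

Lemma PP_ge0 t : 0 <= PP t.
Proof. have /andP[h1 h2] := EW_bound i hr t; lra. Qed.

Lemma tele_lower L d : EW L <= \sum_(L <= t < L + d) PP t + EW (L + d).
Proof.
elim: d => [|d IH]; first by rewrite addn0 big_geq // add0r.
rewrite addnS big_nat_recr ?leq_addr //=.
have := EW_step i hc hr (L + d); lra.
Qed.

Lemma tele_eq L : (forall t, (L <= t)%N -> forall ps, ps \in dist_at P t -> forall hi, ps.2 i = Some hi -> r hi ord0 = 0) ->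
  forall d, \sum_(L <= t < L + d) PP t + EW (L + d) = EW L.
Proof.
move=> H; elim => [|d IH]; first by rewrite addn0 big_geq // add0r.
rewrite addnS big_nat_recr ?leq_addr //= EW_step_eq //; last by apply: H; rewrite leq_addr.
lra.
Qed.

Lemma PP_mono t d : PP (t + d) <= PP t.
Proof.
elim: d => [|d IH]; first by rewrite addn0.
by rewrite addnS; apply: le_trans (PP_step i hc hr _) IH.
Qed.

Lemma count_bound L d : d%:R * PP (L + d) <= \sum_(L <= t < L + d) PP t.
Proof.
elim: d => [|d IH]; first by rewrite addn0 big_geq // mul0r.
rewrite addnS big_nat_recr ?leq_addr //= -natr1 mulrDl mul1r.
have h1 := PP_step i hc hr (L + d).
have h2 : d%:R * PP (L + d).+1 <= d%:R * PP (L + d) by rewrite ler_wpM2l.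
lra.
Qed.

Local Open Scope ereal_scope.

Definition Ser L := \sum_(L <= t <oo) ((pending_prob P i t / pending_prob P i L)%:E).

Lemma Ser_ge0_terms0 L : forall t, (L <= t)%N -> (0 : \bar R) <= (pending_prob P i t / pending_prob P i L)%:E.
Proof. by move=> t _; rewrite lee_fin !pending_probE divr_ge0 // PP_ge0. Qed.
Lemma Ser_ge0_terms L : forall t, (L <= t)%N -> xpredT t -> (0 : \bar R) <= (pending_prob P i t / pending_prob P i L)%:E.
Proof. by move=> t Lt _; apply: Ser_ge0_terms0. Qed.

Lemma partialE L T : \sum_(L <= t < T) ((pending_prob P i t / pending_prob P i L)%:E) =
  ((\sum_(L <= t < T) PP t) / PP L)%:E.
Proof. by rewrite sumEFin mulr_suml; congr EFin; apply: eq_bigr => t _; rewrite !pending_probE. Qed.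

Lemma Ser_upper L : (0 < PP L)%R ->
  (forall t, (L <= t)%N -> forall ps, ps \in dist_at P t -> forall hi, ps.2 i = Some hi -> r hi ord0 = 0%R) ->
  Ser L <= (EW L / PP L)%:E.
Proof.
move=> pos H; apply: lime_le; first by apply: is_cvg_ereal_nneg_natsum; exact: Ser_ge0_terms0.
apply: nearW => T; rewrite partialE lee_fin ler_pM2r; last by rewrite invr_gt0.
case: (leqP T L) => [TL|LT]; first by rewrite big_geq //; have /andP[] := EW_bound i hr L.
have HT := tele_eq H (T - L); rewrite subnKC in HT; last exact: ltnW.
by rewrite -HT lerDl; have /andP[] := EW_bound i hr T.
Qed.

Lemma Ser_lower L : (0 < PP L)%R -> (EW L / PP L)%:E <= Ser L.
Proof.
move=> pos.
have S0 : 0 <= Ser L by rewrite /Ser; apply: ser_ge0 => t _; rewrite lee_fin !pending_probE divr_ge0 // PP_ge0.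
case E: (Ser L) => [s| |]; last by move: S0; rewrite E.
  2: exact: leey.
have s0 : (0 <= s)%R by move: S0; rewrite E lee_fin.
rewrite lee_fin; apply: archi_lemma => // d d0.
have hp : ((\sum_(L <= t < L + d) PP t) / PP L <= s)%R.
  by rewrite -lee_fin -E -partialE /Ser; apply: partial_le => t _; rewrite lee_fin !pending_probE divr_ge0 // PP_ge0.
have h1 := tele_lower L d.
have h2 := count_bound L d.
have /andP[_ h3] := EW_bound i hr (L + d).
exact: (alg_lemma (ler0n R d) pos hp h1 h2 h3).
Qed.

End Tele.


Section Final.
Variables (R : realType) (n : nat).
Hypothesis hc : check n.

Lemma f2_rule : is_rule (f2 R).
Proof.
move=> h; split => [a|]; first by rewrite /f2; case: (_ == _); rewrite ?invr_ge0 ?ler0n.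
rewrite !big_ord_recr big_ord0 /= /f2 /=.
have h2 : (2^-1 : R) + 2^-1 = 1 by field.
by rewrite !add0r.
Qed.

Lemma forced_rule (h : history 2) (g : rule R 2) : is_rule g -> is_rule (forced h g).
Proof.
move=> hg h'; rewrite /forced; case: ifP => _; last exact: hg.
split => [a|]; first by rewrite ler0n.
rewrite (bigD1 (nth ord0 h (size h'))) //= eqxx big1 ?addr0 // => a /negbTE ->.
by [].
Qed.

Lemma main_ineq (i : 'I_n) (h : history 2) (g : rule R 2) : is_rule g ->
  possible_history (f2 R) i h ->
  (cond_latency (f2 R) i h (f2 R) <= cond_latency (f2 R) i h g)%E.
Proof.
move=> hg ph.
have rf := forced_rule h f2_rule.
have rg := forced_rule h hg.
have deq : forall t, (t <= size h)%N ->
    dist_at (deviate (f2 R) i (forced h g)) t = dist_at (deviate (f2 R) i (forced h (f2 R))) t.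
  move=> t th; apply: dist_eq => j h' lt; rewrite /deviate; case: (j == i) => //.
  rewrite /forced; have -> : (size h' < size h)%N by apply: leq_trans lt th.
  by [].
have PPeq : PP (deviate (f2 R) i (forced h g)) i (size h) = PP (deviate (f2 R) i (forced h (f2 R))) i (size h).
  by rewrite /PP deq.
have EWeq : EW (deviate (f2 R) i (forced h g)) i (size h) = EW (deviate (f2 R) i (forced h (f2 R))) i (size h).
  by rewrite /EW deq.
have pos : 0 < PP (deviate (f2 R) i (forced h (f2 R))) i (size h) by rewrite -pending_probE.
have Hf : forall t, (size h <= t)%N -> forall ps, ps \in dist_at (deviate (f2 R) i (forced h (f2 R))) t ->
    forall hi, ps.2 i = Some hi -> forced h (f2 R) hi ord0 = 0.
  move=> t Lt ps Hps hi e; rewrite /forced (dist_size Hps e) ltnNge Lt /=.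
  by rewrite /f2 eqxx.
have U := Ser_upper hc rf pos Hf.
have pos' := pos; rewrite -PPeq in pos'.
have Lw := Ser_lower hc rg pos'.
rewrite /cond_latency /=; apply: leeD2l.
apply: (le_trans U); rewrite -EWeq -PPeq; exact: Lw.
Qed.

Lemma others_init (i : 'I_n) : others n (patL (init_state n 2)) i = n.-1.
Proof.
rewrite /others; transitivity (count (fun m : nat => m != i) (iota 0 n)).
  apply: eq_in_count => m; rewrite mem_iota add0n /= => lt.
  by rewrite -[m]/(val (Ordinal lt)) nth_patL ffunE andbT.
have := count_predC (pred1 (i : nat)) (iota 0 n).
rewrite count_uniq_mem ?iota_uniq // mem_iota add0n ltn_ord /= size_iota.
by move=> e; rewrite -[in RHS]e add1n.
Qed.

Lemma main_value (i : 'I_n) : cond_latency (f2 R) i [::] (f2 R) = (ratr (Vq n.-1))%:E.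
Proof.
have rf := forced_rule [::] f2_rule.
have P0 : PP (deviate (f2 R) i (forced [::] (f2 R))) i 0 = 1.
  by rewrite /PP /= big_cons big_nil /Pr /PL nth_patL ffunE /= rmorph1 mulr1 addr0.
have E0 : EW (deviate (f2 R) i (forced [::] (f2 R))) i 0 = ratr (Vq n.-1).
  by rewrite /EW /= big_cons big_nil mul1r addr0 /Wr /WL nth_patL ffunE /= others_init.
have pos : 0 < PP (deviate (f2 R) i (forced [::] (f2 R))) i 0 by rewrite P0.
have Hf : forall t, (size ([::] : history 2) <= t)%N -> forall ps, ps \in dist_at (deviate (f2 R) i (forced [::] (f2 R))) t ->
    forall hi, ps.2 i = Some hi -> forced [::] (f2 R) hi ord0 = 0.
  by move=> t Lt ps Hps hi e; rewrite /forced /= /f2 eqxx.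
have U := Ser_upper hc rf pos Hf.
have Lw := Ser_lower hc rf pos.
rewrite P0 E0 divr1 in U Lw.
rewrite /cond_latency /= mulr0n add0e; apply: le_anti; rewrite U.
exact: Lw.
Qed.

End Final.

Unset Implicit Arguments. Set Strict Implicit.

Theorem theorem3 (R : realType) (n : nat) :
  n \in [:: 2; 3; 4]%N ->
  @equilibrium R n 2 (f2 R) /\
  forall i : 'I_n,
    cond_latency (f2 R) i [::] (f2 R) =
    ((if n == 2%N then 2 else if n == 3%N then 8 / 3 else 4 : R))%:E.
Proof.
move=> hn.
have hc : check n.
  by move: hn; rewrite !inE => /or3P[] /eqP ->; [exact: check2|exact: check3|exact: check4].
split.
- split; first exact: f2_rule.
  move=> i h ph g hg; exact: main_ineq.
- move=> i; rewrite main_value //; congr EFin.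
  move: hn; rewrite !inE => /or3P[] /eqP -> /=; rewrite /Vq /=.
  + by rewrite rmorph_nat.
  + by rewrite fmorph_div !rmorph_nat.
  + by rewrite rmorph_nat.
Qed.
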